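(* (a) For every $b\in\Lambda^2_0E$, the tensor $R=\vartheta(b\otimes g)+12\,\psi(b\otimes g)$ lies in $\mathcal R$, satisfies $L(R)=6R$ and $L_\sigma(R)=0$, and $\mathrm{Ric}(R)=48(n+1)b$. (b) $\vartheta(g\otimes g)+12\psi(g\otimes g)$ is a nonzero multiple of $\pi_2+6\pi_1$, and $\mathrm{Ric}(\pi_2+6\pi_1)=12(2n+1)g$. (c) If $R\in\mathcal R$ satisfies $L(R)=6R$ and $L_\sigma(R)=0$, then $\mathrm{Ric}(R)=\mathrm{Ric}^q(R)$ and $A\,\mathrm{Ric}(R)=\mathrm{Ric}(R)$ for $A=I,J,K$ (i.e. $\mathrm{Ric}(R)\in\mathbb Rg+\Lambda^2_0E$).
   Context: $\mathcal V$ is a real $4n$-dimensional vector space with inner product $g=\langle\cdot,\cdot\rangle$ and endomorphisms $I,J,K$ with $I^2=J^2=-1$, $K=IJ=-JI$, $\langle Ax,Ay\rangle=\langle x,y\rangle$; $\omega_A(x,y)=\langle x,Ay\rangle$; $\{e_i\}$ orthonormal basis, summation convention. $\mathcal R$: algebraic curvature tensors (4-linear $R$ with $R(x,y,z,u)=-R(y,x,z,u)=-R(x,y,u,z)=R(z,u,x,y)$ and first Bianchi identity). $\mathrm{Ric}(R)(x,y)=R(x,e_i,y,e_i)$, $\mathrm{Ric}^q(R)(x,y)=\sum_AR(x,e_i,Ay,Ae_i)$. For an $s$-linear form $b$: $(A_{(i)}b)(X_1,..,X_s)=-b(X_1,..,AX_i,..,X_s)$ and $(Ab)(X_1,..,X_s)=(-1)^sb(AX_1,..,AX_s)$.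 $L$ and $L_\sigma$: $L(R)=\sum_A\sum_{i<j}A_{(i)}A_{(j)}R$, $L_\sigma(R)=\sum_A(A_{(1)}A_{(2)}+A_{(2)}A_{(3)}\sigma+A_{(1)}A_{(3)}\sigma^2+A_{(3)}A_{(4)}+A_{(1)}A_{(4)}\sigma+A_{(2)}A_{(4)}\sigma^2)R$ with $\sigma R(x,y,z,u)=R(z,x,y,u)$, words applied right to left. For bilinear forms $b,c$: $(b\otimes c)(x,y,z,u)=b(x,y)c(z,u)$, $b\odot c=\tfrac12(b\otimes c+c\otimes b)$, and $(b\wedge c)(x,y,z,u)=b(x,y)c(z,u)+b(z,u)c(x,y)-b(x,z)c(y,u)-b(y,u)c(x,z)+b(x,u)c(y,z)+b(y,z)c(x,u)$. For symmetric $b,c$: $\psi(b\otimes c)(x,y,z,u)=b(x,z)c(y,u)-b(x,u)c(y,z)+c(x,z)b(y,u)-c(x,u)b(y,z)$ and $\vartheta(b\otimes c)=\sum_A\big(6(A_{(1)}-A_{(2)})b\odot(A_{(1)}-A_{(2)})c-(A_{(1)}-A_{(2)})b\wedge(A_{(1)}-A_{(2)})c\big)$. $\pi_1(x,y,z,u)=\langle x,z\rangle\langle y,u\rangle-\langle x,u\rangle\langle y,z\rangle$, $\pi_2=\sum_A(6\omega_A\odot\omega_A-\omega_A\wedge\omega_A)$. $\Lambda^2_0E$ denotes the space of symmetric trace-free bilinear forms $b$ on $\mathcal V$ with $b(Ax,Ay)=b(x,y)$ for $A=I,J,K$. *)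

(* Defs.v *)
(* The real 4n-dimensional Euclidean space V is modelled as
   column vectors 'cV[R]_m (m = 4n) over a real field R with the standard
   inner product; endomorphisms are m x m matrices acting by A *m x. *)
From HB Require Import structures.
From mathcomp Require Import all_boot all_order all_algebra.
Set Implicit Arguments. Unset Strict Implicit. Unset Printing Implicit Defensive.
Import Order.TTheory GRing.Theory Num.Theory.
Local Open Scope ring_scope.

Section QK.
Variable R : realFieldType.
Variable m : nat.

Definition vec := 'cV[R]_m.
Definition endo := 'M[R]_m.
Definition form2 := vec -> vec -> R.
Definition form4 := vec -> vec -> vec -> vec -> R.

Definition ip (x y : vec) : R := (x^T *m y) 0 0.
Definition ebase (i : 'I_m) : vec := delta_mx i 0.

Definition quat_struct (I J K : endo) : Prop :=
  [/\ I *m I = - 1%:M, J *m J = - 1%:M, K = I *m J, K = - (J *m I)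
    & forall A, A \in [:: I; J; K] -> forall x y : vec, ip (A *m x) (A *m y) = ip x y].

Definition sumA (I J K : endo) (F : endo -> R) : R := F I + F J + F K.

Definition omega (A : endo) : form2 := fun x y => ip x (A *m y).

Definition bilinear2 (b : form2) : Prop :=
  (forall (a : R) x x' y, b (a *: x + x') y = a * b x y + b x' y) /\
  (forall (a : R) x y y', b x (a *: y + y') = a * b x y + b x y').

Definition multilinear4 (T : form4) : Prop :=
  (forall (a : R) x x' y z u, T (a *: x + x') y z u = a * T x y z u + T x' y z u) /\
  (forall (a : R) x y y' z u, T x (a *: y + y') z u = a * T x y z u + T x y' z u) /\
  (forall (a : R) x y z z' u, T x y (a *: z + z') u = a * T x y z u + T x y z' u) /\
  (forall (a : R) x y z u u', T x y z (a *: u + u') = a * T x y z u + T x y z u').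

Definition alg_curv (T : form4) : Prop :=
  multilinear4 T /\
  (forall x y z u, T x y z u = - T y x z u) /\
  (forall x y z u, T x y z u = - T x y u z) /\
  (forall x y z u, T x y z u = T z u x y) /\
  (forall x y z u, T x y z u + T y z x u + T z x y u = 0).

Definition Ric (T : form4) : form2 :=
  fun x y => \sum_(i < m) T x (ebase i) y (ebase i).
Definition Ricq (I J K : endo) (T : form4) : form2 :=
  fun x y => sumA I J K (fun A => \sum_(i < m) T x (ebase i) (A *m y) (A *m ebase i)).

Definition a1 (A : endo) (T : form4) : form4 := fun x y z u => - T (A *m x) y z u.
Definition a2 (A : endo) (T : form4) : form4 := fun x y z u => - T x (A *m y) z u.
Definition a3 (A : endo) (T : form4) : form4 := fun x y z u => - T x y (A *m z) u.
Definition a4 (A : endo) (T : form4) : form4 := fun x y z u => - T x y z (A *m u).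
Definition b1 (A : endo) (b : form2) : form2 := fun x y => - b (A *m x) y.
Definition b2 (A : endo) (b : form2) : form2 := fun x y => - b x (A *m y).
(* A b for s = 2 : (A b)(x,y) = (-1)^2 b(Ax, Ay) *)
Definition actA2 (A : endo) (b : form2) : form2 :=
  fun x y => (-1) ^+ 2 * b (A *m x) (A *m y).

Definition sigma (T : form4) : form4 := fun x y z u => T z x y u.

Definition add4 (T S : form4) : form4 := fun x y z u => T x y z u + S x y z u.
Definition sub2 (b c : form2) : form2 := fun x y => b x y - c x y.

Definition Lop (I J K : endo) (T : form4) : form4 := fun x y z u =>
  sumA I J K (fun A =>
    a1 A (a2 A T) x y z u + a1 A (a3 A T) x y z u + a1 A (a4 A T) x y z u
  + a2 A (a3 A T) x y z u + a2 A (a4 A T) x y z u + a3 A (a4 A T) x y z u).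

Definition Lsigma (I J K : endo) (T : form4) : form4 := fun x y z u =>
  sumA I J K (fun A =>
    a1 A (a2 A T) x y z u + a2 A (a3 A (sigma T)) x y z u
  + a1 A (a3 A (sigma (sigma T))) x y z u + a3 A (a4 A T) x y z u
  + a1 A (a4 A (sigma T)) x y z u + a2 A (a4 A (sigma (sigma T))) x y z u).

Definition otimes (b c : form2) : form4 := fun x y z u => b x y * c z u.
Definition odot (b c : form2) : form4 :=
  fun x y z u => 2^-1 * (otimes b c x y z u + otimes c b x y z u).
Definition wedge (b c : form2) : form4 := fun x y z u =>
  b x y * c z u + b z u * c x y - b x z * c y u - b y u * c x z
  + b x u * c y z + b y z * c x u.

(* psi(b (x) c) and theta(b (x) c), written as functions of the pair (b, c) *)
Definition psi (b c : form2) : form4 := fun x y z u =>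
  b x z * c y u - b x u * c y z + c x z * b y u - c x u * b y z.

Definition dA (A : endo) (b : form2) : form2 := sub2 (b1 A b) (b2 A b).

Definition theta (I J K : endo) (b c : form2) : form4 := fun x y z u =>
  sumA I J K (fun A =>
    6 * odot (dA A b) (dA A c) x y z u - wedge (dA A b) (dA A c) x y z u).

Definition gform : form2 := ip.

Definition pi1 : form4 := fun x y z u => ip x z * ip y u - ip x u * ip y z.
Definition pi2 (I J K : endo) : form4 := fun x y z u =>
  sumA I J K (fun A => 6 * odot (omega A) (omega A) x y z u
                       - wedge (omega A) (omega A) x y z u).

Definition Lambda20E (I J K : endo) (b : form2) : Prop :=
  [/\ bilinear2 b, (forall x y, b x y = b y x),
      \sum_(i < m) b (ebase i) (ebase i) = 0
    & forall A, A \in [:: I; J; K] -> forall x y, b (A *m x) (A *m y) = b x y].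

End QK.

(* Main.v *)
Require Import Defs.
From HB Require Import structures.
From mathcomp Require Import all_boot all_order all_algebra.
From Stdlib Require Import Ring FunctionalExtensionality.
Set Implicit Arguments. Unset Strict Implicit. Unset Printing Implicit Defensive.
Import Order.TTheory GRing.Theory Num.Theory.
Local Open Scope ring_scope.

Section Ring.
Variable R : realFieldType.
Definition rA (x y : R) : R := x + y.
Definition rM (x y : R) : R := x * y.
Definition rN (x : R) : R := - x.
Definition r0 : R := 0.
Definition r1 : R := 1.
Lemma RT : @ring_theory R r0 r1 rA rM (fun x y => rA x (rN y)) rN eq.
Proof. rewrite /rA /rM /rN /r0 /r1. split=> //; [exact: add0r|exact: addrC|exact: addrA|exact: mul1r|exact: mulrC|exact: mulrA|exact: mulrDl|move=> x; exact: subrr]. Qed.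
Lemma eA (x y : R) : x + y = rA x y. by []. Qed.
Lemma eM (x y : R) : x * y = rM x y. by []. Qed.
Lemma eN (x : R) : - x = rN x. by []. Qed.
Lemma e0 : 0 = r0 :> R. by []. Qed.
Lemma e1 : 1 = r1 :> R. by []. Qed.
Lemma eAf : (@GRing.add R) = rA. by []. Qed.
Lemma eMf : (@GRing.mul R) = rM. by []. Qed.
Lemma eNf : (@GRing.opp R) = rN. by []. Qed.
Lemma toR (a b : R) : @eq R a b -> @eq R a b. by []. Qed.
Add Ring Rr : RT.
Ltac rg := apply: toR; rewrite ?mulrS ?mulr0n ?eA ?eM ?eN ?e0 ?e1; ring.
Ltac rg2 := apply: toR; rewrite ?mulrS ?mulr0n ?eAf ?eMf ?eNf ?e0 ?e1; ring.
Lemma rgtest (x y : R) : (x + y) * (x - y) = x * x - y * y + 6 - 2 * 3.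
Proof. rg. Qed.

Variable m : nat.
Local Notation vec := 'cV[R]_m.
Local Notation e := (@ebase R m).
Local Notation ip := (@ip R m).

Definition lin1 (f : vec -> R) := forall (a : R) x x', f (a *: x + x') = a * f x + f x'.

Lemma lin0 f : lin1 f -> f 0 = 0.
Proof. move=> H; have := H 1 0 0; rewrite scaler0 addr0 mul1r -{1}[f 0]addr0 => /addrI ->//. Qed.
Lemma linD f : lin1 f -> forall x y, f (x + y) = f x + f y.
Proof. by move=> H x y; rewrite -{1}[x]scale1r H mul1r. Qed.
Lemma linZ f : lin1 f -> forall a x, f (a *: x) = a * f x.
Proof. by move=> H a x; rewrite -[a *: x]addr0 H lin0 // addr0. Qed.
Lemma linN f : lin1 f -> forall x, f (- x) = - f x.
Proof. by move=> H x; rewrite -scaleN1r linZ // mulN1r. Qed.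
Lemma linB f : lin1 f -> forall x y, f (x - y) = f x - f y.
Proof. by move=> H x y; rewrite linD // linN. Qed.

Lemma ebE (i k : 'I_m) : e i k 0 = (k == i)%:R.
Proof. by rewrite /ebase mxE eqxx andbT. Qed.

Lemma vexp (x : vec) : x = \sum_i x i 0 *: e i.
Proof.
apply/matrixP=> k j; rewrite (ord1 j) summxE (bigD1 k) //= big1 => [|i /negbTE ik].
  by rewrite !mxE eqxx /= mulr1 addr0.
by rewrite !mxE eq_sym ik /= mulr0.
Qed.

Lemma lin_sum f : lin1 f -> forall x, f x = \sum_i x i 0 * f (e i).
Proof.
move=> H x; rewrite {1}(vexp x) (big_morph f (linD H) (lin0 H)).
by apply: eq_bigr => i _; rewrite linZ.
Qed.

Lemma ipE x y : ip x y = \sum_i x i 0 * y i 0.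
Proof. by rewrite /Defs.ip mxE; apply: eq_bigr => i _; rewrite mxE. Qed.

Lemma ip_sym x y : ip x y = ip y x.
Proof. by rewrite !ipE; apply: eq_bigr => i _; rewrite mulrC. Qed.

Lemma ip_linr x : lin1 (ip x).
Proof.
move=> a y y'; rewrite !ipE mulr_sumr -big_split /=; apply: eq_bigr => i _.
by rewrite !mxE mulrDr mulrCA.
Qed.
Lemma ip_linl y : lin1 (ip^~ y).
Proof. by move=> a x x'; rewrite /= ![ip _ y]ip_sym ip_linr. Qed.

Lemma ip_er x i : ip x (e i) = x i 0.
Proof.
rewrite ipE (bigD1 i) //= big1 => [|k /negbTE ki]; first by rewrite ebE eqxx mulr1 addr0.
by rewrite ebE ki mulr0.
Qed.
Lemma ip_el x i : ip (e i) x = x i 0.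
Proof. by rewrite ip_sym ip_er. Qed.

Lemma Me (M : 'M[R]_m) i k : (M *m e i) k 0 = M k i.
Proof.
rewrite mxE (bigD1 i) //= big1 => [|j /negbTE ji]; first by rewrite ebE eqxx mulr1 addr0.
by rewrite ebE ji mulr0.
Qed.

Lemma lin_mx (f : vec -> R) (M : 'M[R]_m) : lin1 f -> lin1 (fun x => f (M *m x)).
Proof. by move=> H a x x' /=; rewrite mulmxDr -scalemxAr H. Qed.

Lemma BC (F : vec -> vec -> R) (M N : 'M[R]_m) :
  (forall t, lin1 (F^~ t)) -> (forall s, lin1 (F s)) ->
  \sum_i F (M *m e i) (N *m e i) =
  \sum_k \sum_l (M *m N^T) k l * F (e k) (e l).
Proof.
move=> H1 H2.
have E i : F (M *m e i) (N *m e i) = \sum_k \sum_l (M k i * N l i) * F (e k) (e l).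
  rewrite (lin_sum (H1 _)); apply: eq_bigr => k _; rewrite (lin_sum (H2 _)) mulr_sumr.
  by apply: eq_bigr => l _; rewrite !Me mulrA.
under eq_bigr do rewrite E.
rewrite exchange_big /=; apply: eq_bigr => k _; rewrite exchange_big /=; apply: eq_bigr => l _.
by rewrite -mulr_suml mxE; congr (_ * _); apply: eq_bigr => i _; rewrite mxE.
Qed.

Lemma BC_eq (F : vec -> vec -> R) (M N M' N' : 'M[R]_m) :
  (forall t, lin1 (F^~ t)) -> (forall s, lin1 (F s)) -> M *m N^T = M' *m N'^T ->
  \sum_i F (M *m e i) (N *m e i) = \sum_i F (M' *m e i) (N' *m e i).
Proof. by move=> H1 H2 E; rewrite !BC // E. Qed.


Variables I J K : 'M[R]_m.
Hypothesis HQ : quat_struct I J K.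

Lemma HII : I *m I = - 1%:M. Proof. by case: HQ. Qed.
Lemma HJJ : J *m J = - 1%:M. Proof. by case: HQ. Qed.
Lemma HIJ : I *m J = K. Proof. by case: HQ. Qed.
Lemma HJI : J *m I = - K. Proof. by case: HQ => _ _ _ -> _; rewrite opprK. Qed.
Lemma HIK : I *m K = - J. Proof. by rewrite -HIJ mulmxA HII mulNmx mul1mx. Qed.
Lemma HKJ : K *m J = - I. Proof. by rewrite -HIJ -mulmxA HJJ mulmxN mulmx1. Qed.
Lemma HKI : K *m I = J.
Proof. by case: HQ => _ _ _ -> _; rewrite mulNmx -mulmxA HII mulmxN mulmx1 opprK. Qed.
Lemma HJK : J *m K = I.
Proof. by case: HQ => _ _ _ -> _; rewrite mulmxN mulmxA HJJ mulNmx mul1mx opprK. Qed.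
Lemma HKK : K *m K = - 1%:M.
Proof. by rewrite -{1}HIJ -mulmxA HJK HII. Qed.

Definition inQ (A : 'M[R]_m) := A \in [:: I; J; K].

Lemma inQ_I : inQ I. Proof. by rewrite /inQ !inE eqxx. Qed.
Lemma inQ_J : inQ J. Proof. by rewrite /inQ !inE eqxx !orbT. Qed.
Lemma inQ_K : inQ K. Proof. by rewrite /inQ !inE eqxx !orbT. Qed.

Lemma AA A : inQ A -> A *m A = - 1%:M.
Proof. by rewrite /inQ !inE => /or3P [] /eqP ->; [exact: HII|exact: HJJ|exact: HKK]. Qed.

Lemma Aorth A : inQ A -> forall x y, ip (A *m x) (A *m y) = ip x y.
Proof. by case: HQ => _ _ _ _ H hA; apply: H. Qed.

Lemma ATA A : inQ A -> A^T *m A = 1%:M.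
Proof.
move=> hA; apply/matrixP=> i j.
have := Aorth hA (e i) (e j); rewrite ipE ip_er ebE eq_sym.
under eq_bigr do rewrite !Me.
move=> h; rewrite !mxE -h; apply: eq_bigr => k _; by rewrite mxE.
Qed.

Lemma AT A : inQ A -> A^T = - A.
Proof.
move=> hA; have h1 : A *m (- A) = 1%:M by rewrite mulmxN AA // opprK.
by rewrite -[A^T]mulmx1 -h1 mulmxA ATA // mul1mx.
Qed.

Lemma AAT A : inQ A -> A *m A^T = 1%:M.
Proof. by move=> hA; rewrite AT // mulmxN AA // opprK. Qed.

Lemma AAx A (x : vec) : inQ A -> A *m (A *m x) = - x.
Proof. by move=> hA; rewrite mulmxA AA // mulNmx mul1mx. Qed.

Definition bil (f : vec -> vec -> R) := (forall t, lin1 (f^~ t)) /\ (forall s, lin1 (f s)).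

Lemma bil_of (b : form2 R m) : bilinear2 b -> bil b.
Proof. by case=> H1 H2; split=> [t a x x'|s a x x'] /=; [apply: H1|apply: H2]. Qed.

Lemma bil_ip : bil ip.
Proof. by split=> [t|s]; [apply: ip_linl|apply: ip_linr]. Qed.

Lemma inv_skew (f : vec -> vec -> R) A : bil f -> inQ A ->
  (forall x y, f (A *m x) (A *m y) = f x y) ->
  forall x y, f (A *m x) y = - f x (A *m y).
Proof.
move=> [H1 H2] hA Hf x y; rewrite -[LHS](Hf (A *m x) y) AAx //.
exact: (linN (H1 _)).
Qed.

Lemma ip_skew A : inQ A -> forall x y, ip (A *m x) y = - ip x (A *m y).
Proof. by move=> hA; apply: (inv_skew bil_ip hA (Aorth hA)). Qed.


Lemma lin_mulr (g : vec -> R) c : lin1 g -> lin1 (fun s => g s * c).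
Proof. by move=> H a x x' /=; rewrite H mulrDl mulrA. Qed.
Lemma lin_mull (g : vec -> R) c : lin1 g -> lin1 (fun s => c * g s).
Proof. by move=> H a x x' /=; rewrite H mulrDr mulrCA. Qed.

Lemma SK (F : vec -> vec -> R) A : bil F -> inQ A ->
  \sum_i F (A *m e i) (e i) = - \sum_i F (e i) (A *m e i).
Proof.
move=> [H1 H2] hA.
have -> : \sum_i F (A *m e i) (e i) = \sum_i F (A *m e i) (1%:M *m e i).
  by apply: eq_bigr => i _; rewrite mul1mx.
have -> : - \sum_i F (e i) (A *m e i) = \sum_i F (1%:M *m e i) ((- A) *m e i).
  rewrite -sumrN; apply: eq_bigr => i _; rewrite mul1mx mulNmx (linN (H2 _)) //.
apply: BC_eq => //; by rewrite trmx1 mulmx1 mul1mx linearN /= AT // opprK.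
Qed.

Lemma ORTH (F : vec -> vec -> R) A : bil F -> inQ A ->
  \sum_i F (A *m e i) (A *m e i) = \sum_i F (e i) (e i).
Proof.
move=> [H1 H2] hA.
have -> : \sum_i F (e i) (e i) = \sum_i F (1%:M *m e i) (1%:M *m e i).
  by apply: eq_bigr => i _; rewrite mul1mx.
by apply: BC_eq => //; rewrite AAT // trmx1 mulmx1.
Qed.

Lemma EXP (f : vec -> vec -> R) x y : bil f ->
  \sum_i f x (e i) * ip y (e i) = f x y.
Proof.
move=> [H1 H2]; rewrite [RHS](lin_sum (H2 x)); apply: eq_bigr => i _.
by rewrite ip_er mulrC.
Qed.

Lemma EXPl (f : vec -> vec -> R) x y : bil f ->
  \sum_i ip x (e i) * f (e i) y = f x y.
Proof.
move=> [H1 H2]; rewrite [RHS](lin_sum (H1 y)); apply: eq_bigr => i _.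
by rewrite ip_er.
Qed.

Lemma SUM1 (f : vec -> vec -> R) A x y : bil f -> inQ A ->
  \sum_i f x (A *m e i) * ip y (A *m e i) = f x y.
Proof.
move=> [H1 H2] hA; rewrite (ORTH (F := fun s t => f x s * ip y t)) ?EXP //.
split=> [t|s] /=; [apply: lin_mulr; exact: H2|apply: lin_mull; exact: ip_linr].
Qed.

Lemma ip_ee i : ip (e i) (e i) = 1.
Proof. by rewrite ip_er ebE eqxx. Qed.

Lemma sum_ip_ee : \sum_(i < m) ip (e i) (e i) = m%:R.
Proof. by under eq_bigr do rewrite ip_ee; rewrite sumr_const card_ord. Qed.

Lemma self_skew (f : vec -> vec -> R) A x : (forall u v, f u (A *m v) = - f v (A *m u)) -> f x (A *m x) = 0.
Proof.
move=> H; have := H x x; move/eqP; rewrite -subr_eq0 opprK -mulr2n -mulr_natr mulf_eq0.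
by rewrite pnatr_eq0 orbF => /eqP.
Qed.

Lemma ip_sw A : inQ A -> forall u v, ip u (A *m v) = - ip v (A *m u).
Proof. by move=> hA u v; rewrite ip_sym ip_skew. Qed.

Lemma odot6 (P Q : vec -> vec -> R) x y z u :
  6 * odot P Q x y z u = 3 * (P x y * Q z u + Q x y * P z u).
Proof.
rewrite /odot /otimes mulrA; congr (_ * _).
have h2 : (2 : R) != 0 by rewrite pnatr_eq0.
have -> : (6 : R) = 3 * 2 by rg.
by rewrite -mulrA mulfV // mulr1.
Qed.

Lemma dAg A : inQ A -> dA A (@gform R m) = fun x y => 2 * ip x (A *m y).
Proof.
move=> hA; apply: functional_extensionality => x; apply: functional_extensionality => y.
rewrite /dA /sub2 /b1 /b2 /gform ip_skew //; rg.
Qed.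

Definition PsiF (P Q : vec -> vec -> R) p q r s :=
  3 * (P p q * Q r s + Q p q * P r s) -
  (P p q * Q r s + P r s * Q p q - P p r * Q q s - P q s * Q p r + P p s * Q q r + P q r * Q p s).

Lemma wedge_odot (P Q : vec -> vec -> R) x y z u :
  6 * odot P Q x y z u - wedge P Q x y z u = PsiF P Q x y z u.
Proof. by rewrite odot6 /wedge /PsiF; rg. Qed.


Section PartA.
Variable b : form2 R m.
Hypothesis Hb : Lambda20E I J K b.

Lemma bbil : bil b. Proof. by case: Hb => /bil_of. Qed.
Lemma bsym x y : b x y = b y x. Proof. by case: Hb. Qed.
Lemma btr : \sum_i b (e i) (e i) = 0. Proof. by case: Hb. Qed.
Lemma binv A : inQ A -> forall x y, b (A *m x) (A *m y) = b x y.
Proof. by case: Hb => _ _ _ H hA; apply: H. Qed.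
Lemma bskew A : inQ A -> forall x y, b (A *m x) y = - b x (A *m y).
Proof. by move=> hA; apply: (inv_skew bbil hA (binv hA)). Qed.
Lemma bsw A : inQ A -> forall u v, b u (A *m v) = - b v (A *m u).
Proof. by move=> hA u v; rewrite bsym bskew. Qed.
Lemma bN x y : b x (- y) = - b x y.
Proof. by case: bbil => _ H; rewrite (linN (H _)). Qed.
Lemma ipN x y : ip x (- y) = - ip x y.
Proof. by rewrite (linN (ip_linr _)). Qed.

Lemma dAb A : inQ A -> dA A b = fun x y => 2 * b x (A *m y).
Proof.
move=> hA; apply: functional_extensionality => x; apply: functional_extensionality => y.
rewrite /dA /sub2 /b1 /b2 bskew //; rg.
Qed.

Definition Ta : form4 R m := fun x y z u =>
  theta I J K b (@gform R m) x y z u + 12 * psi b (@gform R m) x y z u.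

Lemma Tval p q r s : Ta p q r s =
  4 * (PsiF (fun u v => b u (I *m v)) (fun u v => ip u (I *m v)) p q r s
     + PsiF (fun u v => b u (J *m v)) (fun u v => ip u (J *m v)) p q r s
     + PsiF (fun u v => b u (K *m v)) (fun u v => ip u (K *m v)) p q r s)
  + 12 * (b p r * ip q s - b p s * ip q r + ip p r * b q s - ip p s * b q r).
Proof.
rewrite /Ta /theta /sumA (dAb inQ_I) (dAb inQ_J) (dAb inQ_K).
rewrite (dAg inQ_I) (dAg inQ_J) (dAg inQ_K) !wedge_odot /PsiF /psi /gform /=.
rg.
Qed.



Ltac orient x y := rewrite ?(bsym y x) ?(bsw inQ_I y x) ?(bsw inQ_J y x) ?(bsw inQ_K y x)
  ?(ip_sym y x) ?(ip_sw inQ_I y x) ?(ip_sw inQ_J y x) ?(ip_sw inQ_K y x).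
Ltac orient4 x y z u := orient x y; orient x z; orient x u; orient y z; orient y u; orient z u.

Lemma t1 x y z u : Ta x y z u = - Ta y x z u.
Proof.
rewrite !Tval /PsiF; cbv beta.
orient4 x y z u.
rg2.
Qed.

Ltac nrm := rewrite ?(bskew inQ_I) ?(bskew inQ_J) ?(bskew inQ_K) ?(ip_skew inQ_I) ?(ip_skew inQ_J) ?(ip_skew inQ_K);
  rewrite ?mulmxA;
  do 3 rewrite ?HII ?HJJ ?HKK ?HIJ ?HJI ?HIK ?HKI ?HJK ?HKJ ?mulNmx ?mul1mx;
  rewrite ?bN ?ipN ?opprK.

Definition bb X (p q : vec) := b p (X *m q).
Definition gg X (p q : vec) := ip p (X *m q).
Lemma foldb X p q : b p (X *m q) = bb X p q. by []. Qed.
Lemma foldg X p q : ip p (X *m q) = gg X p q. by []. Qed.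

Ltac expT x y z u :=
  repeat match goal with |- context [Ta ?a ?b ?c ?d] =>
    let E := fresh "E" in let h := fresh "h" in evar (E : Num.RealField.sort R);
    assert (h : Ta a b c d = E) by (rewrite Tval /PsiF; cbv beta; nrm; orient4 x y z u; rewrite ?foldb ?foldg /E; reflexivity);
    rewrite h; clear h; subst E
  end.


Lemma Ta_D x y z u : Ta (I *m x) y z u + Ta x (I *m y) z u + Ta x y (I *m z) u + Ta x y z (I *m u) = 0.
Proof.
expT x y z u.
rg2.
Qed.

Lemma Ta_L x y z u : Lop I J K Ta x y z u = 6 * Ta x y z u.
Proof.
rewrite /Lop /sumA /a1 /a2 /a3 /a4; cbv beta.
expT x y z u.
rg2.
Qed.

Lemma Ta_Ls x y z u : Lsigma I J K Ta x y z u = 0.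
Proof.
rewrite /Lsigma /sumA /a1 /a2 /a3 /a4 /sigma; cbv beta.
expT x y z u.
orient4 x y z u.
rg2.
Qed.

Lemma bL a p p' v : b (a *: p + p') v = a * b p v + b p' v.
Proof. by case: bbil => H _; rewrite (H v). Qed.
Lemma bR a p p' v : b v (a *: p + p') = a * b v p + b v p'.
Proof. by case: bbil => _ H; rewrite (H v). Qed.
Lemma ipL a p p' v : ip (a *: p + p') v = a * ip p v + ip p' v.
Proof. by rewrite ip_linl. Qed.
Lemma ipR a p p' v : ip v (a *: p + p') = a * ip v p + ip v p'.
Proof. by rewrite ip_linr. Qed.

Ltac linT := rewrite !Tval /PsiF; cbv beta;
  rewrite ?mulmxDr -?scalemxAr ?bL ?bR ?ipL ?ipR ?foldb ?foldg; rg2.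

Lemma Ta_curv : alg_curv Ta.
Proof.
split.
  split; [|split; [|split]].
  - by move=> a x x' y z u; linT.
  - by move=> a x y y' z u; linT.
  - by move=> a x y z z' u; linT.
  - by move=> a x y z u u'; linT.
split; [|split; [|split]].
- by move=> x y z u; expT x y z u; rg2.
- by move=> x y z u; expT x y z u; rg2.
- by move=> x y z u; expT x y z u; rg2.
- by move=> x y z u; expT x y z u; rg2.
Qed.

Lemma bself X w : inQ X -> b w (X *m w) = 0.
Proof. by move=> hX; apply: self_skew => u v; rewrite bsw. Qed.
Lemma ipself X w : inQ X -> ip w (X *m w) = 0.
Proof. by move=> hX; apply: self_skew => u v; rewrite ip_sw. Qed.

Lemma Ric_summand x y w : Ta x w y w =
  12 * (b x (I *m w) * ip y (I *m w)) + 12 * (b y (I *m w) * ip x (I *m w))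
+ 12 * (b x (J *m w) * ip y (J *m w)) + 12 * (b y (J *m w) * ip x (J *m w))
+ 12 * (b x (K *m w) * ip y (K *m w)) + 12 * (b y (K *m w) * ip x (K *m w))
+ 12 * (b x y * ip w w) - 12 * (b x w * ip y w) + 12 * (ip x y * b w w)
- 12 * (ip x w * b w y).
Proof.
rewrite Tval /PsiF; cbv beta.
rewrite ?(bself w inQ_I) ?(bself w inQ_J) ?(bself w inQ_K) ?(ipself w inQ_I) ?(ipself w inQ_J) ?(ipself w inQ_K).
rewrite ?(bsw inQ_I w y) ?(bsw inQ_J w y) ?(bsw inQ_K w y) ?(ip_sw inQ_I w y) ?(ip_sw inQ_J w y) ?(ip_sw inQ_K w y).
rewrite (ip_sym w y) ?foldb ?foldg.
rg2.
Qed.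

Lemma Ta_Ric x y : Ric Ta x y = (48 + 12 * m%:R) * b x y.
Proof.
rewrite /Ric; under eq_bigr do rewrite Ric_summand.
do 10 rewrite ?sumrB ?big_split /=.
have S A u v : inQ A -> \sum_i 12 * (b u (A *m e i) * ip v (A *m e i)) = 12 * b u v.
  by move=> hA; rewrite -mulr_sumr SUM1 //; exact: bbil.
rewrite !S ?inQ_I ?inQ_J ?inQ_K //.
rewrite -!mulr_sumr sumrN -mulr_sumr sum_ip_ee btr EXP ?EXPl; try exact: bbil.
rewrite [b y x]bsym; rg2.
Qed.
End PartA.

Definition g2 X (p q : vec) := ip p (X *m q).
Lemma foldg2 X p q : ip p (X *m q) = g2 X p q. by []. Qed.

Lemma partb1 x y z u :
  theta I J K (@gform R m) (@gform R m) x y z u + 12 * psi (@gform R m) (@gform R m) x y z u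
  = 4 * (pi2 I J K x y z u + 6 * pi1 x y z u).
Proof.
rewrite /theta /pi2 /sumA (dAg inQ_I) (dAg inQ_J) (dAg inQ_K) !wedge_odot /PsiF /psi /pi1 /omega /gform.
cbv beta. rewrite ?foldg2. rg2.
Qed.

Lemma pi_summand x y w : pi2 I J K x w y w + 6 * pi1 x w y w =
  6 * (ip x (I *m w) * ip y (I *m w)) + 6 * (ip x (J *m w) * ip y (J *m w))
+ 6 * (ip x (K *m w) * ip y (K *m w)) + 6 * (ip x y * ip w w) - 6 * (ip x w * ip y w).
Proof.
rewrite /pi2 /sumA !wedge_odot /PsiF /pi1 /omega; cbv beta.
rewrite ?(ipself w inQ_I) ?(ipself w inQ_J) ?(ipself w inQ_K).
rewrite ?(ip_sw inQ_I w y) ?(ip_sw inQ_J w y) ?(ip_sw inQ_K w y).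
rewrite (ip_sym w y) ?foldg2.
rg2.
Qed.

Lemma partb2 x y : Ric (fun x y z u => pi2 I J K x y z u + 6 * pi1 x y z u) x y
  = (12 + 6 * m%:R) * ip x y.
Proof.
rewrite /Ric; under eq_bigr do rewrite pi_summand.
do 10 rewrite ?sumrB ?big_split /=.
have S A u v : inQ A -> \sum_i 6 * (ip u (A *m e i) * ip v (A *m e i)) = 6 * ip u v.
  by move=> hA; rewrite -mulr_sumr SUM1 //; exact: bil_ip.
rewrite !S ?inQ_I ?inQ_J ?inQ_K //.
rewrite -!mulr_sumr sum_ip_ee EXP; last exact: bil_ip.
rg2.
Qed.


Definition F4 := 'I_m -> 'I_m -> 'I_m -> 'I_m -> R.
Definition crd (S : form4 R m) : F4 := fun i j k l => S (e i) (e j) (e k) (e l).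
Definition pair (s u : F4) := \sum_i \sum_j \sum_k \sum_l s i j k l * u i j k l.

Lemma pairDl (s1 s2 u : F4) :
  pair (fun i j k l => s1 i j k l + s2 i j k l) u = pair s1 u + pair s2 u.
Proof.
rewrite /pair -big_split; apply: eq_bigr => i _; rewrite -big_split; apply: eq_bigr => j _.
rewrite -big_split; apply: eq_bigr => k _; rewrite -big_split; apply: eq_bigr => l _.
by rewrite mulrDl.
Qed.
Lemma pairDr (s u1 u2 : F4) :
  pair s (fun i j k l => u1 i j k l + u2 i j k l) = pair s u1 + pair s u2.
Proof.
rewrite /pair -big_split; apply: eq_bigr => i _; rewrite -big_split; apply: eq_bigr => j _.
rewrite -big_split; apply: eq_bigr => k _; rewrite -big_split; apply: eq_bigr => l _.
by rewrite mulrDr.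
Qed.

Section Adj.
Variable A : 'M[R]_m.
Hypothesis Askew : forall a l, A l a = - A a l.

Lemma adj0 (f g : 'I_m -> R) :
  \sum_l (\sum_a A a l * f a) * g l = - \sum_l f l * (\sum_a A a l * g a).
Proof.
under eq_bigr do rewrite mulr_suml.
rewrite exchange_big /= -sumrN; apply: eq_bigr => a _; rewrite mulr_sumr -sumrN; apply: eq_bigr => l _.
rewrite (Askew a l); rg2.
Qed.

Lemma adj0' (f g : 'I_m -> R) :
  \sum_l f l * (\sum_a A a l * g a) = - \sum_l (\sum_a A a l * f a) * g l.
Proof. by rewrite adj0 opprK. Qed.

Lemma swap2 (F : 'I_m -> 'I_m -> R) : \sum_k \sum_l F k l = \sum_l \sum_k F k l.
Proof. exact: exchange_big. Qed.
Lemma swap3 (F : 'I_m -> 'I_m -> 'I_m -> R) :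
  \sum_j \sum_k \sum_l F j k l = \sum_k \sum_l \sum_j F j k l.
Proof. rewrite exchange_big; apply: eq_bigr => k _; exact: exchange_big. Qed.
Lemma swap4 (F : 'I_m -> 'I_m -> 'I_m -> 'I_m -> R) :
  \sum_i \sum_j \sum_k \sum_l F i j k l = \sum_j \sum_k \sum_l \sum_i F i j k l.
Proof. rewrite exchange_big; apply: eq_bigr => j _; exact: swap3. Qed.

Lemma sl4 (s u : F4) :
  pair (fun i j k l => \sum_a A a l * s i j k a) u
  = - pair s (fun i j k l => \sum_a A a l * u i j k a).
Proof.
rewrite /pair -sumrN; apply: eq_bigr => i _; rewrite -sumrN; apply: eq_bigr => j _.
rewrite -sumrN; apply: eq_bigr => k _; exact: adj0.
Qed.

Lemma sl3 (s u : F4) :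
  pair (fun i j k l => \sum_a A a k * s i j a l) u
  = - pair s (fun i j k l => \sum_a A a k * u i j a l).
Proof.
rewrite /pair -sumrN; apply: eq_bigr => i _; rewrite -sumrN; apply: eq_bigr => j _.
rewrite swap2 [in RHS]swap2 -sumrN; apply: eq_bigr => l _; exact: adj0.
Qed.

Lemma sl2 (s u : F4) :
  pair (fun i j k l => \sum_a A a j * s i a k l) u
  = - pair s (fun i j k l => \sum_a A a j * u i a k l).
Proof.
rewrite /pair -sumrN; apply: eq_bigr => i _.
rewrite swap3 [in RHS]swap3 -sumrN; apply: eq_bigr => k _; rewrite -sumrN; apply: eq_bigr => l _.
exact: adj0.
Qed.

Lemma sl1 (s u : F4) :
  pair (fun i j k l => \sum_a A a i * s a j k l) u
  = - pair s (fun i j k l => \sum_a A a i * u a j k l).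
Proof.
rewrite /pair swap4 [in RHS]swap4 -sumrN; apply: eq_bigr => j _.
rewrite -sumrN; apply: eq_bigr => k _; rewrite -sumrN; apply: eq_bigr => l _.
exact: adj0.
Qed.

Definition Dc (s : F4) : F4 := fun i j k l =>
  \sum_a A a i * s a j k l + \sum_a A a j * s i a k l
  + \sum_a A a k * s i j a l + \sum_a A a l * s i j k a.

Lemma ADJ (s u : F4) : pair (Dc s) u = - pair s (Dc u).
Proof.
rewrite /Dc !pairDl !pairDr sl1 sl2 sl3 sl4; rg2.
Qed.
End Adj.

Definition Mv (X : 'M[R]_m) (p : vec) := X *m p.
Lemma foldM X p : X *m p = Mv X p. by []. Qed.

Definition DTf (A : 'M[R]_m) (S : form4 R m) : form4 R m := fun x y z u =>
  S (A *m x) y z u + S x (A *m y) z u + S x y (A *m z) u + S x y z (A *m u).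

Lemma ml_DTf A S : multilinear4 S -> multilinear4 (DTf A S).
Proof.
case=> [H1 [H2 [H3 H4]]]; rewrite /DTf.
split; [|split; [|split]] => a x1 x2 x3 x4 x5;
  rewrite ?mulmxDr -?scalemxAr ?H1 ?H2 ?H3 ?H4 ?foldM; rg2.
Qed.

Lemma ML1 S M i y z u : multilinear4 S ->
  S (M *m e i) y z u = \sum_a M a i * S (e a) y z u.
Proof.
case=> [H1 _]; rewrite (lin_sum (f := fun s => S s y z u)); last by move=> a x x'; rewrite H1.
by apply: eq_bigr => a _; rewrite Me.
Qed.
Lemma ML2 S M i x z u : multilinear4 S ->
  S x (M *m e i) z u = \sum_a M a i * S x (e a) z u.
Proof.
case=> [_ [H2 _]]; rewrite (lin_sum (f := fun s => S x s z u)); last by move=> a y y'; rewrite H2.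
by apply: eq_bigr => a _; rewrite Me.
Qed.
Lemma ML3 S M i x y u : multilinear4 S ->
  S x y (M *m e i) u = \sum_a M a i * S x y (e a) u.
Proof.
case=> [_ [_ [H3 _]]]; rewrite (lin_sum (f := fun s => S x y s u)); last by move=> a y' y''; rewrite H3.
by apply: eq_bigr => a _; rewrite Me.
Qed.
Lemma ML4 S M i x y z : multilinear4 S ->
  S x y z (M *m e i) = \sum_a M a i * S x y z (e a).
Proof.
case=> [_ [_ [_ H4]]]; rewrite (lin_sum (f := fun s => S x y z s)); last by move=> a y' y''; rewrite H4.
by apply: eq_bigr => a _; rewrite Me.
Qed.

Lemma crd_DTf A S : multilinear4 S -> crd (DTf A S) = Dc A (crd S).
Proof.
move=> HS; apply: functional_extensionality => i; apply: functional_extensionality => j.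
apply: functional_extensionality => k; apply: functional_extensionality => l.
by rewrite /crd /DTf /Dc ML1 // ML2 // ML3 // ML4.
Qed.

Lemma ML0 S : multilinear4 S -> (forall i j k l, S (e i) (e j) (e k) (e l) = 0) ->
  forall x y z u, S x y z u = 0.
Proof.
case=> [H1 [H2 [H3 H4]]] H0 x y z u.
rewrite (lin_sum (f := fun s => S s y z u)); last by move=> a p p'; rewrite H1.
apply: big1 => i _; rewrite (lin_sum (f := fun s => S (e i) s z u)); last by move=> a p p'; rewrite H2.
rewrite big1 ?mulr0 // => j _; rewrite (lin_sum (f := fun s => S (e i) (e j) s u)); last by move=> a p p'; rewrite H3.
rewrite big1 ?mulr0 // => k _; rewrite (lin_sum (f := fun s => S (e i) (e j) (e k) s)); last by move=> a p p'; rewrite H4.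
by rewrite big1 ?mulr0 // => l _; rewrite H0 mulr0.
Qed.

Lemma pair_ge0 (s : F4) : 0 <= pair s s.
Proof.
by apply: sumr_ge0 => i _; apply: sumr_ge0 => j _; apply: sumr_ge0 => k _; apply: sumr_ge0 => l _;
  rewrite -expr2 sqr_ge0.
Qed.

Lemma pair_eq0 (s : F4) : pair s s = 0 -> forall i j k l, s i j k l = 0.
Proof.
move=> H i j k l.
have P3 (G : 'I_m -> R) : (forall a, 0 <= G a) -> \sum_a G a = 0 -> forall a, G a = 0.
  by move=> HG HS a; apply: (psumr_eq0P (P := xpredT)) => // b _.
have nn3 a b c : 0 <= \sum_d s a b c d * s a b c d by apply: sumr_ge0 => d _; rewrite -expr2 sqr_ge0.
have nn2 a b : 0 <= \sum_c \sum_d s a b c d * s a b c d by apply: sumr_ge0 => c _; apply: nn3.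
have nn1 a : 0 <= \sum_b \sum_c \sum_d s a b c d * s a b c d by apply: sumr_ge0 => c _; apply: nn2.
have h1 := P3 _ nn1 H i; have h2 := P3 _ (nn2 i) h1 j; have h3 := P3 _ (nn3 i j) h2 k.
have h3' : \sum_d s i j k d ^+ 2 = 0 by rewrite -[RHS]h3; apply: eq_bigr => d _; rewrite expr2.
have h4 := P3 _ (fun d => sqr_ge0 (s i j k d)) h3' l.
by apply/eqP; rewrite -sqrf_eq0 h4.
Qed.


Section PartC.
Variable T : form4 R m.
Hypothesis HT : alg_curv T.
Hypothesis HL : forall x y z u, Lop I J K T x y z u = 6 * T x y z u.
Hypothesis HLs : forall x y z u, Lsigma I J K T x y z u = 0.

Lemma Tml : multilinear4 T. Proof. by case: HT. Qed.
Lemma Tas12 x y z u : T x y z u = - T y x z u. Proof. by case: HT => _ [H _]. Qed.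
Lemma Tas34 x y z u : T x y z u = - T x y u z. Proof. by case: HT => _ [_ [H _]]. Qed.
Lemma Tps x y z u : T x y z u = T z u x y. Proof. by case: HT => _ [_ [_ [H _]]]. Qed.
Lemma Tbi x y z u : T x y z u + T y z x u + T z x y u = 0. Proof. by case: HT => _ [_ [_ [_ H]]]. Qed.

Lemma TL1 y z u : lin1 (fun s => T s y z u). Proof. by case: Tml => H _ a x x'; rewrite H. Qed.
Lemma TL2 x z u : lin1 (fun s => T x s z u). Proof. by case: Tml => _ [H _] a y y'; rewrite H. Qed.
Lemma TL3 x y u : lin1 (fun s => T x y s u). Proof. by case: Tml => _ [_ [H _]] a y' y''; rewrite H. Qed.
Lemma TL4 x y z : lin1 (fun s => T x y z s). Proof. by case: Tml => _ [_ [_ H]] a y' y''; rewrite H. Qed.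

Lemma TN1 x y z u : T (- x) y z u = - T x y z u. Proof. exact: (linN (TL1 y z u)). Qed.
Lemma TN2 x y z u : T x (- y) z u = - T x y z u. Proof. exact: (linN (TL2 x z u)). Qed.
Lemma TN3 x y z u : T x y (- z) u = - T x y z u. Proof. exact: (linN (TL3 x y u)). Qed.
Lemma TN4 x y z u : T x y z (- u) = - T x y z u. Proof. exact: (linN (TL4 x y z)). Qed.

Lemma DD x y z u :
  DTf I (DTf I T) x y z u + DTf J (DTf J T) x y z u + DTf K (DTf K T) x y z u = 0.
Proof.
have -> : DTf I (DTf I T) x y z u + DTf J (DTf J T) x y z u + DTf K (DTf K T) x y z u
  = 2 * Lop I J K T x y z u - 12 * T x y z u.
  rewrite /DTf /Lop /sumA /a1 /a2 /a3 /a4; cbv beta.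
  rewrite !mulmxA HII HJJ HKK !mulNmx !mul1mx !TN1 !TN2 !TN3 !TN4 ?foldM; rg2.
by rewrite HL; rg2.
Qed.

Lemma Askew A : inQ A -> forall a l, A l a = - A a l.
Proof. by move=> hA a l; have := congr1 (fun M : 'M[R]_m => M a l) (AT hA); rewrite !mxE. Qed.

Lemma pairA A : inQ A -> pair (crd (DTf A T)) (crd (DTf A T)) =
  - pair (crd T) (crd (DTf A (DTf A T))).
Proof.
move=> hA; rewrite {1}crd_DTf; last exact: Tml.
rewrite ADJ; last exact: Askew.
rewrite -crd_DTf //; apply: ml_DTf; exact: Tml.
Qed.

Lemma Dinv A : inQ A -> forall x y z u, DTf A T x y z u = 0.
Proof.
have H0 : pair (crd (DTf I T)) (crd (DTf I T)) + pair (crd (DTf J T)) (crd (DTf J T))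
   + pair (crd (DTf K T)) (crd (DTf K T)) = 0.
  rewrite !pairA ?inQ_I ?inQ_J ?inQ_K // -!opprD -!pairDr.
  rewrite (_ : (fun i j k l => _) = fun i j k l => 0) ?oppr_eq0.
    by rewrite /pair big1 ?oppr0 // => i _; rewrite big1 // => j _; rewrite big1 // => k _; rewrite big1 // => l _; rewrite mulr0.
  apply: functional_extensionality => i; apply: functional_extensionality => j.
  apply: functional_extensionality => k; apply: functional_extensionality => l.
  exact: DD.
have gI := pair_ge0 (crd (DTf I T)); have gJ := pair_ge0 (crd (DTf J T)); have gK := pair_ge0 (crd (DTf K T)).
move: H0 => /eqP; rewrite paddr_eq0 ?addr_ge0 // paddr_eq0 // => /andP [/andP [/eqP hI /eqP hJ] /eqP hK].
rewrite /inQ !inE => /or3P [] /eqP -> x y z u; apply: ML0; try (apply: ml_DTf; exact: Tml); move=> i j k l.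
- exact: (pair_eq0 hI).
- exact: (pair_eq0 hJ).
- exact: (pair_eq0 hK).
Qed.


Definition rho A u v := \sum_i T u (e i) v (A *m e i).
Lemma rho_fold A u v : \sum_i T u (e i) v (A *m e i) = rho A u v. Proof. by []. Qed.

Lemma bil24 p q : bil (fun s t => T p s q t).
Proof. by split=> [t|s] a x x' /=; [exact: TL2|exact: TL4]. Qed.
Lemma bil43 p q : bil (fun s t => T p q t s).
Proof. by split=> [t|s] a x x' /=; [exact: TL4|exact: TL3]. Qed.
Lemma bil14 p q : bil (fun s t => T s p q t).
Proof. by split=> [t|s] a x x' /=; [exact: TL1|exact: TL4]. Qed.

Lemma L1 A p q : inQ A -> \sum_i T p (A *m e i) q (e i) = - rho A p q.
Proof. by move=> hA; rewrite (SK (F := fun s t => T p s q t)) //; exact: bil24. Qed.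
Lemma L2 A p q : inQ A -> \sum_i T p q (e i) (A *m e i) = - \sum_i T p q (A *m e i) (e i).
Proof. by move=> hA; rewrite (SK (F := fun s t => T p q t s)) //; exact: bil43. Qed.
Lemma L3 A p q : inQ A -> \sum_i T p (A *m e i) q (A *m e i) = Ric T p q.
Proof. by move=> hA; rewrite (ORTH (F := fun s t => T p s q t)) //; exact: bil24. Qed.
Lemma L4 A p q : inQ A -> \sum_i T (A *m e i) p q (A *m e i) = \sum_i T (e i) p q (e i).
Proof. by move=> hA; rewrite (ORTH (F := fun s t => T s p q t)) //; exact: bil14. Qed.
Lemma L5 p q : \sum_i T (e i) p q (e i) = - Ric T p q.
Proof. by rewrite /Ric -sumrN; apply: eq_bigr => i _; rewrite Tas12. Qed.

Lemma Ric_sym x y : Ric T x y = Ric T y x.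
Proof. by rewrite /Ric; apply: eq_bigr => i _; rewrite Tps. Qed.

Lemma sol1 (a c d : R) : a + - d + c + d = 0 -> a = - c.
Proof. by move=> h; apply: (addIr c); rewrite addNr -h; rg2. Qed.

Lemma RicA A x y : inQ A -> Ric T (A *m x) y = - Ric T x (A *m y).
Proof.
move=> hA; apply: (@sol1 _ _ (\sum_i T x (e i) y (A *m e i))).
have h : \sum_i DTf A T x (e i) y (e i) = 0 by apply: big1 => i _; exact: Dinv.
by rewrite /DTf !big_split /= L1 // in h.
Qed.

Lemma RicAA A x y : inQ A -> Ric T (A *m x) (A *m y) = Ric T x y.
Proof.
move=> hA; rewrite RicA // AAx //.
by rewrite /Ric -sumrN; apply: eq_bigr => i _; rewrite TN3 opprK.
Qed.

Lemma sol2 (a c r : R) : a + r + c + - r = 0 -> a = - c.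
Proof. by move=> h; apply: (addIr c); rewrite addNr -h; rg2. Qed.

Lemma rhoA A x y : inQ A -> rho A (A *m x) y = - rho A x (A *m y).
Proof.
move=> hA; apply: (@sol2 _ _ (Ric T x y)).
have h : \sum_i DTf A T x (e i) y (A *m e i) = 0 by apply: big1 => i _; exact: Dinv.
rewrite /DTf !big_split /= L3 // in h.
move: h; rewrite !rho_fold.
have -> : \sum_i T x (e i) y (A *m (A *m e i)) = - Ric T x y.
  by rewrite /Ric -sumrN; apply: eq_bigr => i _; rewrite AAx // TN4.
by [].
Qed.

Lemma sol3 (X r : R) : X + - r + - r = 0 -> X = 2 * r.
Proof. move=> h; have -> : X = (X + - r + - r) + 2 * r by rg2. by rewrite h add0r. Qed.

Lemma sig A u v : inQ A -> \sum_i T u v (A *m e i) (e i) = 2 * rho A v u.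
Proof.
move=> hA; apply: sol3.
have h : \sum_i (T u v (A *m e i) (e i) + T v (A *m e i) u (e i) + T (A *m e i) u v (e i)) = 0.
  by apply: big1 => i _; exact: Tbi.
rewrite !big_split /= L1 // in h.
rewrite -[RHS]h; congr (_ + _).
rewrite /rho -sumrN; apply: eq_bigr => i _; by rewrite [RHS]Tps [RHS]Tas34.
Qed.

Lemma Ricq_eq x y : Ric T x y = Ricq I J K T x y.
Proof.
have h : \sum_i Lsigma I J K T x (e i) y (e i) = 0 by apply: big1 => i _; exact: HLs.
rewrite /Lsigma /sumA /a1 /a2 /a3 /a4 /sigma in h; cbv beta in h.
rewrite !big_split /= !sumrN !opprK in h.
rewrite ?L1 ?L2 ?L4 ?sig ?L5 ?inQ_I ?inQ_J ?inQ_K // in h.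
rewrite ?rho_fold ?rhoA ?RicAA ?inQ_I ?inQ_J ?inQ_K // in h.
rewrite (Ric_sym y x) in h.
rewrite /Ricq /sumA !rho_fold.
have h6 : 6 * (rho I x (I *m y) + rho J x (J *m y) + rho K x (K *m y)) - 6 * Ric T x y = 0.
  by rewrite -[RHS]h ?foldM; rg2.
apply/eqP; rewrite eq_sym -subr_eq0; apply/eqP.
move: h6; rewrite -mulrBr => /eqP; rewrite mulf_eq0 pnatr_eq0 /= => /eqP //.
Qed.

Lemma RicInv A : inQ A -> forall x y, actA2 A (Ric T) x y = Ric T x y.
Proof. by move=> hA x y; rewrite /actA2 expr2 mulN1r opprK mul1r RicAA. Qed.
End PartC.

Lemma arith1 (k : nat) (c : R) : (48 + 12 * (4 * k)%:R) * c = 48 * (k%:R + 1) * c.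
Proof. rewrite natrM; rg2. Qed.
Lemma arith2 (k : nat) (c : R) : (12 + 6 * (4 * k)%:R) * c = 12 * (2 * k%:R + 1) * c.
Proof. rewrite natrM; rg2. Qed.
Lemma four_neq0 : (4 : R) != 0. Proof. by rewrite pnatr_eq0. Qed.
End Ring.

Theorem proposition4p2 (R : realFieldType) (n : nat) (I J K : 'M[R]_(4 * n)) :
  (0 < n)%N ->
  quat_struct I J K ->
  (* (a) *)
  (forall b : form2 R (4 * n), Lambda20E I J K b ->
     let T := fun x y z u => theta I J K b (gform (m:=4*n)) x y z u
                             + 12 * psi b (gform (m:=4*n)) x y z u in
     [/\ alg_curv T,
         (forall x y z u, Lop I J K T x y z u = 6 * T x y z u),
         (forall x y z u, Lsigma I J K T x y z u = 0)
       & (forall x y, Ric T x y = 48 * (n%:R + 1) * b x y)]) /\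
  (* (b) *)
  ((exists c : R, c != 0 /\
      forall x y z u,
        theta I J K (gform (m:=4*n)) (gform (m:=4*n)) x y z u
        + 12 * psi (gform (m:=4*n)) (gform (m:=4*n)) x y z u
        = c * (pi2 I J K x y z u + 6 * pi1 x y z u)) /\
   (forall x y, Ric (fun x y z u => pi2 I J K x y z u + 6 * pi1 x y z u) x y
                = 12 * (2 * n%:R + 1) * gform x y)) /\
  (* (c) *)
  (forall T : form4 R (4 * n), alg_curv T ->
     (forall x y z u, Lop I J K T x y z u = 6 * T x y z u) ->
     (forall x y z u, Lsigma I J K T x y z u = 0) ->
     (forall x y, Ric T x y = Ricq I J K T x y) /\
     (forall A, A \in [:: I; J; K] -> forall x y, actA2 A (Ric T) x y = Ric T x y)).
Proof.
move=> _ HQ; split; [|split].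
- move=> b Hb T; split.
  + exact: (Ta_curv HQ Hb).
  + move=> x y z u; exact: (Ta_L HQ Hb).
  + move=> x y z u; exact: (Ta_Ls HQ Hb).
  + move=> x y; rewrite -arith1; exact: (Ta_Ric HQ Hb).
- split.
  + exists 4; split; first exact: four_neq0.
    move=> x y z u; exact: (partb1 HQ).
  + move=> x y; rewrite -arith2; exact: (partb2 HQ).
- move=> T HT HL HLs; split.
  + move=> x y; exact: (Ricq_eq HQ HT HL HLs).
  + move=> A hA x y; exact: (RicInv HQ HT HL hA).
Qed.
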